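(* Let $\alpha>0$, let $\mathcal{X}\subset\mathbb{R}^d$ be convex, and let $K$ be the conic hull of $\mathcal{X}$, assumed closed. Let $\mathcal{A}=\{y\in\mathbb{R}^d: x^Ty\le\|x\|\,\alpha\ \text{for all } x\in\mathcal{X}\}$ and $\mathcal{B}=\{y\in\mathbb{R}^d:\|p_K(y)\|\le\alpha\}$. Then $\mathcal{A}=\mathcal{B}$.
   Context: $\|\cdot\|$ is the Euclidean norm. The conic hull of a set is the smallest convex cone containing it. For a closed convex set $C\subset\mathbb{R}^d$ and $y\in\mathbb{R}^d$, the projection $p_C(y)$ is the unique point of $C$ with $\|p_C(y)-y\|=\inf_{x\in C}\|x-y\|$. *)

(* Defs.v *)
From HB Require Import structures.
From mathcomp Require Import all_boot all_order all_algebra.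
From mathcomp Require Import all_classical all_reals all_analysis.
Set Implicit Arguments. Unset Strict Implicit. Unset Printing Implicit Defensive.
Import Order.TTheory GRing.Theory Num.Theory.
Local Open Scope classical_set_scope.
Local Open Scope ring_scope.

(* R^d is modelled as row vectors 'rV[R]_d. *)
Definition dotv (R : realType) (d : nat) (u v : 'rV[R]_d) : R :=
  \sum_(i < d) u ord0 i * v ord0 i.

Definition enorm (R : realType) (d : nat) (u : 'rV[R]_d) : R :=
  Num.sqrt (dotv u u).

Definition is_cone (R : realType) (d : nat) (C : set 'rV[R]_d) : Prop :=
  forall x (t : R), 0 <= t -> C x -> C (t *: x).

Definition convex_cone (R : realType) (d : nat) (C : set 'rV[R]_d) : Prop :=
  is_cone C /\ convex_set C.

Definition conic_hull (R : realType) (d : nat) (X : set 'rV[R]_d) : set 'rV[R]_d :=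
  [set y | forall C : set 'rV[R]_d, convex_cone C -> X `<=` C -> C y].

Definition is_proj (R : realType) (d : nat) (C : set 'rV[R]_d) (y p : 'rV[R]_d) : Prop :=
  C p /\ forall x, C x -> enorm (p - y) <= enorm (x - y).

(* the projection p_C(y): the (unique, for C closed convex nonempty) nearest point *)
Definition proj_onto (R : realType) (d : nat) (C : set 'rV[R]_d) (y : 'rV[R]_d) : 'rV[R]_d :=
  xget 0 [set p | is_proj C y p].

(* Main.v *)
Require Import Defs.
From HB Require Import structures.
From mathcomp Require Import all_boot all_order all_algebra.
From mathcomp Require Import all_classical all_reals all_analysis.
From mathcomp Require Import ring lra.
Import Order.TTheory GRing.Theory Num.Theory numFieldTopology.Exports numFieldNormedType.Exports.
Local Open Scope classical_set_scope.
Local Open Scope ring_scope.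
Local Open Scope convex_scope.
Section D.
Context {R : realType} {d : nat}.
Implicit Types (u v w : 'rV[R]_d).
Lemma dotvC u v : dotv u v = dotv v u.
Proof. by rewrite /dotv; apply: eq_bigr => i _; rewrite mulrC. Qed.
Lemma dotvDl u v w : dotv (u + v) w = dotv u w + dotv v w.
Proof. by rewrite /dotv -big_split; apply: eq_bigr => i _; rewrite mxE mulrDl. Qed.
Lemma dotvZl a u w : dotv (a *: u) w = a * dotv u w.
Proof. by rewrite /dotv mulr_sumr; apply: eq_bigr => i _; rewrite mxE mulrA. Qed.
Lemma dotvNl u w : dotv (- u) w = - dotv u w.
Proof. by rewrite -scaleN1r dotvZl mulN1r. Qed.
Lemma dotvBl u v w : dotv (u - v) w = dotv u w - dotv v w.
Proof. by rewrite dotvDl dotvNl. Qed.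
Lemma dotvDr u v w : dotv w (u + v) = dotv w u + dotv w v.
Proof. by rewrite dotvC dotvDl !(dotvC w). Qed.
Lemma dotvZr a u w : dotv w (a *: u) = a * dotv w u.
Proof. by rewrite dotvC dotvZl dotvC. Qed.
Lemma dotvBr u v w : dotv w (u - v) = dotv w u - dotv w v.
Proof. by rewrite dotvC dotvBl !(dotvC w). Qed.
Lemma dotv_ge0 u : 0 <= dotv u u.
Proof. by apply: sumr_ge0 => i _; rewrite -expr2 sqr_ge0. Qed.
Lemma dotv00 u : dotv u u = 0 -> forall v, dotv u v = 0.
Proof.
move=> H v; rewrite /dotv big1 // => i _.
have h0 : forall j : 'I_d, true -> 0 <= u ord0 j * u ord0 j by move=> j _; rewrite -expr2 sqr_ge0.
have := psumr_eq0P h0 H (i:=i) isT.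
by move=> /eqP; rewrite mulf_eq0 orbb => /eqP ->; rewrite mul0r.
Qed.
Lemma enorm_ge0 u : 0 <= enorm u. Proof. exact: sqrtr_ge0. Qed.
Lemma enorm_sq u : enorm u ^+ 2 = dotv u u.
Proof. by rewrite sqr_sqrtr // dotv_ge0. Qed.
Lemma CS u v : dotv u v <= enorm u * enorm v.
Proof.
have [a0|a0] := eqVneq (dotv u u) 0.
  by rewrite dotv00 // mulr_ge0 // enorm_ge0.
have [b0|b0] := eqVneq (dotv v v) 0.
  by rewrite dotvC dotv00 // mulr_ge0 // enorm_ge0.
set a := enorm u; set b := enorm v.
have ha : 0 < a by rewrite lt_neqAle enorm_ge0 andbT eq_sym sqrtr_eq0 -ltNge lt_neqAle eq_sym a0 dotv_ge0.
have hb : 0 < b by rewrite lt_neqAle enorm_ge0 andbT eq_sym sqrtr_eq0 -ltNge lt_neqAle eq_sym b0 dotv_ge0.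
have := dotv_ge0 (b *: u - a *: v).
rewrite !(dotvBl, dotvBr, dotvZl, dotvZr) -!enorm_sq -/a -/b (dotvC v u).
move=> H.
have H2 : 0 <= (2 * (a * b)) * (a * b - dotv u v).
  by apply: le_trans H _; rewrite le_eqVlt; apply/orP; left; apply/eqP; ring.
rewrite pmulr_rge0 in H2; first by rewrite subr_ge0 in H2.
by rewrite mulr_gt0 // mulr_gt0.
Qed.
Lemma enormZ t u : enorm (t *: u) = `|t| * enorm u.
Proof. by rewrite /enorm dotvZl dotvZr mulrA -expr2 sqrtrM ?sqr_ge0 // sqrtr_sqr. Qed.
Lemma enorm0 : enorm (0 : 'rV[R]_d) = 0.
Proof. by rewrite /enorm /dotv big1 ?sqrtr0 // => i _; rewrite mxE mul0r. Qed.
Lemma coord_le u i : `|u ord0 i| <= enorm u.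
Proof.
rewrite -sqrtr_sqr ler_sqrt ?dotv_ge0 // /dotv (bigD1 i) //= expr2 lerDl.
by apply: sumr_ge0 => j _; rewrite -expr2 sqr_ge0.
Qed.
Lemma expand u k s : dotv (u + s *: k) (u + s *: k) = dotv u u + 2 * s * dotv u k + s ^+ 2 * dotv k k.
Proof. rewrite !(dotvDl, dotvDr, dotvZl, dotvZr) (dotvC k u). ring. Qed.
End D.
Section C.
Context {R : realType} {d : nat}.
Definition mk01 {t : R} (h : 0 <= t <= 1) : {i01 R}.
Proof. refine (@Itv.Def _ _ _ t _). rewrite /Itv.spec /Itv.num_sem /=.
case/andP: h => h0 h1; rewrite in_itv /= h0 h1 andbT. by rewrite ger0_real. Defined.
Lemma convE (x y : 'rV[R]_d) (l : {i01 R}) :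
  ((x : convex_lmodType _) <| l |> y) = l%:num *: x + (1 - l%:num) *: y.
Proof. by []. Qed.
Lemma cone_add (C : set 'rV[R]_d) a b : convex_cone C -> C a -> C b -> C (a + b).
Proof.
move=> [cc cv] Ca Cb.
have h : (0 <= (2^-1 : R)) && (2^-1 <= 1 :> R) by apply/andP; split; lra.
have := cv a b (mk01 h). rewrite !in_setE => /(_ Ca Cb).
rewrite convE => /(cc _ 2) -/(_ ltac:(lra)).
have -> : (1 - (mk01 h)%:num) = 2^-1 :> R by rewrite /=; field.
by rewrite /= -scalerDr scalerA mulfV ?scale1r //; lra.
Qed.
Context (X : set 'rV[R]_d).
Lemma hull_cc : convex_cone (conic_hull X).
Proof.
split.
  by move=> x t t0 Kx C CC XC; case: (CC) => cc _; apply: cc => //; apply: Kx.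
move=> x y l; rewrite !in_setE => Kx Ky C CC XC.
case: (CC) => _ cv. have := cv x y l. rewrite !in_setE. apply; [exact: Kx|exact: Ky].
Qed.
Lemma hull_sub : X `<=` conic_hull X.
Proof. by move=> x Xx C _; apply. Qed.
Definition S := [set k | exists t x, 0 <= t /\ X x /\ k = t *: x].
Lemma S_cc : convex_set X -> convex_cone S.
Proof.
move=> cvX; split.
  move=> k t t0 [s [x [s0 [Xx ->]]]]; exists (t * s), x; split; first exact: mulr_ge0.
  by rewrite scalerA.
move=> a b l; rewrite !in_setE => -[t1 [x1 [t10 [X1 ->]]]] [t2 [x2 [t20 [X2 ->]]]].
rewrite convE !scalerA.
set L := l%:num.
have L0 : 0 <= L by rewrite /L; apply: ge0.
have L1 : L <= 1 by rewrite /L; apply: le1.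
set T := L * t1 + (1 - L) * t2.
have p1 : 0 <= L * t1 by rewrite mulr_ge0.
have p2 : 0 <= (1 - L) * t2 by rewrite mulr_ge0 // subr_ge0.
have [T0|Tn0] := eqVneq T 0.
  have e1 : L * t1 = 0 by move: T0; rewrite /T; lra.
  have e2 : (1 - L) * t2 = 0 by move: T0; rewrite /T e1 add0r.
  by exists 0, x1; split => //; split => //; rewrite e1 e2 !scale0r addr0.
have Tp : 0 < T by rewrite lt_neqAle eq_sym Tn0 addr_ge0.
have hm : 0 <= L * t1 / T <= 1.
  apply/andP; split; first by apply: divr_ge0 => //; apply: ltW.
  by rewrite ler_pdivrMr // mul1r /T lerDl.
exists T, ((x1 : convex_lmodType _) <| mk01 hm |> x2); split; first exact: ltW.
split.
  by have := cvX x1 x2 (mk01 hm); rewrite !in_setE; apply.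
rewrite convE /= scalerDr !scalerA; congr (_ *: _ + _ *: _); move: Tn0; rewrite /T => Tn0; field; exact: Tn0.
Qed.
End C.
Section S.
Context {R : realType}.
Context {d : nat}.
Lemma cont_sum (F : 'I_d -> 'rV[R]_d -> R) : (forall i, continuous (F i)) ->
  continuous (fun k => \sum_i F i k).
Proof.
move=> Fc k.
suff H : forall s : seq 'I_d, (fun k => \sum_(i <- s) F i k) @ k --> \sum_(i <- s) F i k by exact: H.
elim=> [|i s IH].
  have -> : (fun k => \sum_(i <- [::]) F i k) = fun=> 0 by apply: funext => ?; rewrite big_nil.
  rewrite big_nil. have := (@cst_continuous _ R 0 k). exact.
have -> : (fun k => \sum_(j <- i :: s) F j k) = (fun k => F i k + \sum_(j <- s) F j k).
  by apply: funext => ?; rewrite big_cons.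
rewrite big_cons. exact: (cvgD (Fc i k) IH).
Qed.
Lemma gcont (y : 'rV[R]_d) : continuous (fun k : 'rV[R]_d => dotv (k - y) (k - y)).
Proof.
rewrite /dotv; apply: cont_sum => i k.
have -> : (fun k : 'rV[R]_d => (k - y) ord0 i * (k - y) ord0 i) =
   (fun k => (k ord0 i - y ord0 i) * (k ord0 i - y ord0 i)).
  by apply: funext => ?; rewrite !mxE.
rewrite ?mxE.
have c1 := @coord_continuous R 1 d ord0 i k.
have c2 := @cst_continuous _ R (y ord0 i) k.
have Fk : Filter (nbhs k) by apply: nbhs_filter.
have c3 := cvgB c1 c2. move: c3 => /(_ Fk) c3.
have c4 := cvgM c3 c3. move: c4 => /(_ Fk) c4. exact: c4.

Qed.
Lemma bnd (A : set 'rV[R]_d) (B : R) : 0 <= B ->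
  (forall x, A x -> forall i, `|x ord0 i| <= B) -> bounded_set A.
Proof.
move=> B0 H. rewrite /= /bounded_near.
exists B; split; first by rewrite ger0_real.
move=> M BM x Ax /=.
have [/eqP n0|n0] := eqVneq (mx_norm x) 0.
  rewrite /Num.norm /= (eqP n0). exact: le_trans B0 (ltW BM).
rewrite /Num.norm /=. have [[a b] /= ->] := mx_norm_neq0 n0.
rewrite (ord1 a). exact: le_trans (H x Ax b) (ltW BM).
Qed.
End S.
Lemma small (R : realType) (a b : R) : 0 <= b ->
  (forall s, 0 < s -> s <= 1 -> 0 <= a + s * b) -> 0 <= a.
Proof.
move=> b0 H; rewrite leNgt; apply/negP => a0.
have ba : 0 < b - a by lra.
have := H (- a / (b - a)).
have s0 : 0 < - a / (b - a) by apply: divr_gt0; lra.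
have s1 : - a / (b - a) <= 1 by rewrite ler_pdivrMr //; lra.
move=> /(_ s0 s1).
have -> : a + - a / (b - a) * b = - (a * a) / (b - a) by field; lra.
rewrite pmulr_lge0 ?invr_gt0 //. nra.
Qed.
Lemma fin (R : realType) (n al : R) : 0 < al -> 0 <= n -> n ^+ 2 <= al * n -> n <= al.
Proof. move=> *. nra. Qed.
Lemma aux (R : realType) (s a b c : R) : 0 < s -> c <= c + 2 * s * a + s ^+ 2 * b -> 0 <= 2 * a + s * b.
Proof.
move=> s0 H. have : 0 <= s * (2 * a + s * b).
  have -> : s * (2 * a + s * b) = 2 * s * a + s ^+ 2 * b by ring.
  lra.
by rewrite pmulr_rge0.
Qed.
Section P.
Context {R : realType} {d : nat}.
Lemma proj_ex (K : set 'rV[R]_d) y : closed K -> (exists k, K k) -> exists p, is_proj K y p.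
Proof.
move=> cK [k0 Kk0].
pose g := fun k => dotv (k - y) (k - y).
pose r := g k0.
pose A := K `&` [set k | g k <= r].
have cA : closed A.
  apply: closedI => //.
  apply: (preimage_closed (f:=g) (D:=[set z | z <= r])); last exact: closed_le.
  by move=> x _; apply: gcont.
have bA : bounded_set A.
  apply: (@bnd _ _ _ (Num.sqrt r + enorm y)).
    by rewrite addr_ge0 // ?enorm_ge0 ?sqrtr_ge0.
  move=> x [Kx gx] i.
  have -> : x ord0 i = (x - y) ord0 i + y ord0 i by rewrite !mxE subrK.
  apply: le_trans (ler_normD _ _) _.
  apply: lerD; last exact: coord_le.
  apply: le_trans (coord_le _ _) _.
  by rewrite /enorm ler_sqrt // /r /g dotv_ge0.
have compA := bounded_closed_compact bA cA.
have [c cA' cmin] := @EVT_min_rV R d g A (ex_intro _ k0 (conj Kk0 (lexx _))) compA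
  (continuous_subspaceT (fun x => gcont y x)).
move: cA'; rewrite in_setE => -[Kc gc].
exists c; split => // x Kx.
rewrite /enorm ler_sqrt ?dotv_ge0 //.
have [gx|gx] := leP (g x) r.
  by apply: cmin; rewrite in_setE.
exact: le_trans gc (ltW gx).
Qed.
Lemma var (K : set 'rV[R]_d) y p : convex_cone K -> is_proj K y p ->
  (forall k, K k -> 0 <= dotv (p - y) k) /\ dotv (p - y) p <= 0.
Proof.
move=> cc [Kp Hp]; set e := p - y.
have key : forall q, K q -> dotv e e <= dotv (q - y) (q - y).
  by move=> q Kq; have := Hp q Kq; rewrite /enorm ler_sqrt // dotv_ge0.
have Kcone := cc.1.
split.
  move=> k Kk.
  suff : 0 <= 2 * dotv e k by lra.
  apply: (@small _ _ (dotv k k)); first exact: dotv_ge0.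
  move=> s s0 s1.
  have Kq : K (p + s *: k) by apply: cone_add cc Kp _; apply: Kcone => //; exact: ltW.
  have := key _ Kq.
  rewrite (_ : p + s *: k - y = e + s *: k); last by rewrite /e addrAC.
  rewrite expand => H. exact: (@aux _ s _ _ _ s0 H).
suff : 0 <= - 2 * dotv e p by lra.
apply: (@small _ _ (dotv p p)); first exact: dotv_ge0.
move=> s s0 s1.
have Kq : K ((1 - s) *: p) by apply: Kcone => //; lra.
have := key _ Kq.
rewrite (_ : (1 - s) *: p - y = e + (- s) *: p); last first.
  by rewrite /e scalerBl scale1r scaleNr addrAC.
rewrite expand => H.
have H' : dotv e e <= dotv e e + 2 * s * (- dotv e p) + s ^+ 2 * dotv p p.
  by move: H; rewrite sqrrN !mulrN !mulNr.
have := @aux _ s _ _ _ s0 H'. lra.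
Qed.
End P.

Theorem mainTheorem16 (R : realType) (d : nat) (alpha : R) (X : set 'rV[R]_d) :
  0 < alpha -> convex_set X -> closed (conic_hull X : set 'rV[R^o]_d) ->
  [set y : 'rV[R]_d | forall x, X x -> dotv x y <= enorm x * alpha]
  = [set y : 'rV[R]_d | enorm (proj_onto (conic_hull X) y) <= alpha].
Proof.
move=> a0 cvX cK.
set K := conic_hull X.
have ccK : convex_cone K := hull_cc X.
have KS : K `<=` S X.
  move=> k Kk; apply: Kk; first exact: S_cc.
  by move=> x Xx; exists 1, x; split => //; split => //; rewrite scale1r.
case: (pselect (exists x, X x)) => [[x0 Xx0]|nX]; last first.
  have K0 : forall k, ~ K k.
    by move=> k /KS [t [x [_ [Xx _]]]]; apply: nX; exists x.
  apply/seteqP; split => y _ /=.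
    rewrite /proj_onto xgetPN ?enorm0 ?ltW // => p [Kp _]; exact: K0 Kp.
  by move=> x Xx; exfalso; apply: nX; exists x.
have KX0 : exists k, K k by exists x0; exact: (@hull_sub _ _ X x0 Xx0).
apply/seteqP; split => y /= Hy.
- have [q Hq'] := @proj_ex R d K y cK KX0.
  have Hq := xgetPex 0 (ex_intro _ q Hq').
  rewrite -/(proj_onto K y) in Hq.
  set q' := proj_onto K y in Hq *.
  have [V1 V2] := @var R d K y q' ccK Hq.
  have [t [x [t0 [Xx qe]]]] := KS _ Hq.1.
  have H1 : dotv q' y <= enorm q' * alpha.
    by rewrite qe dotvZl enormZ ger0_norm // -mulrA ler_wpM2l // Hy.
  have H2 : dotv q' y = dotv q' q' - dotv (q' - y) q'.
    by rewrite dotvBl (dotvC y q'); ring.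
  apply: fin => //; first exact: enorm_ge0.
  rewrite enorm_sq mulrC. lra.
- move=> x Xx.
  have [q Hq'] := @proj_ex R d K y cK KX0.
  have Hq := xgetPex 0 (ex_intro _ q Hq').
  rewrite -/(proj_onto K y) in Hq.
  set q' := proj_onto K y in Hq Hy *.
  have [V1 V2] := @var R d K y q' ccK Hq.
  have Kx : K x by exact: (@hull_sub _ _ X x Xx).
  have H2 : dotv x y = dotv x q' - dotv (q' - y) x.
    by rewrite dotvBl (dotvC q' x) (dotvC y x); ring.
  rewrite H2.
  have := V1 x Kx. have := CS x q'. have := enorm_ge0 x.
  move=> hx hcs hv.
  have : enorm x * enorm q' <= enorm x * alpha by rewrite ler_wpM2l.
  lra.
Qed.
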